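(* Let $c_2,c_3,a_0,a_1,a_2,b_0,b_1$ be constants, $\mu(t)=t^2+c_2t+c_3$, $\phi=a_0\mu(t)^2+a_1\mu(t)+a_2$, $\psi=b_0\mu(t)+b_1$, $\lambda_n=n((n-1)a_0+b_0)$, and $\operatorname{L}_n=\phi\,\mathbb{D}^2+\psi\,\mathbb{S}\mathbb{D}-\lambda_n I$. Assume that for each $n\ge0$ there is a unique monic polynomial $P_n$ of degree $n$ in $\mu(t)$ with $\operatorname{L}_n(P_n)=0$, and write $P_n=\vartheta_n+p_{1,n}\vartheta_{n-1}+p_{2,n}\vartheta_{n-2}+\cdots$. Then for each $n\ge1$ there exists $\beta_n$ such that the polynomial $$U_n=\operatorname{L}_{n+1}\big((\mu(t)-\beta_n)P_n\big)$$ has degree $n-1$ in $\mu(t)$; moreover $$\beta_n=p_{1,n}+f_n+\frac{k_{1,n+1}}{\lambda_n-\lambda_{n+1}},$$ and $U_n=t_n\vartheta_{n-1}+(\text{lower terms in the basis }\vartheta_k)$ with $$t_n=k_{2,n+1}+(f_n+p_{1,n}-\beta_n)k_{1,n}+(p_{1,n}f_{n-1}+p_{2,n}-\beta_np_{1,n})(\lambda_{n-1}-\lambda_{n+1}).$$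
   Context: Operators: $\mathbb{D}f(t)=\frac{f(t+1/2)-f(t-1/2)}{\mu(t+1/2)-\mu(t-1/2)}$ and $\mathbb{S}f(t)=\frac{f(t+1/2)+f(t-1/2)}{2}$, acting on polynomials in $\mu(t)$ (degree lowered by one, resp. preserved). Basis: $\vartheta_n(t)=(-4)^{-n}(2t+1/2+c_2)_n(-2t+1/2-c_2)_n$ (Pochhammer symbols), $\vartheta_k=0$ for $k<0$; $\vartheta_n$ is monic of degree $n$ in $\mu(t)$ and satisfies $\mathbb{D}\vartheta_n=n\vartheta_{n-1}$, $\mu(t)\vartheta_n=\vartheta_{n+1}+f_n\vartheta_n$, $\mathbb{S}\vartheta_n=\vartheta_n+g_n\vartheta_{n-1}$, where $f_n=-\frac{c_2^2}{4}+\frac{(2n+1)^2}{16}+c_3$ and $g_n=\frac{n(2n-1)}{4}$. The constants $k_{1,j},k_{2,j}$ are $k_{1,j}=a_0j(j-1)(f_{j-1}+f_{j-2})+b_0jf_{j-1}+a_1j(j-1)+b_0jg_{j-1}+b_1j$, $k_{2,j}=a_0j(j-1)f_{j-2}^2+a_1j(j-1)f_{j-2}+b_0jg_{j-1}f_{j-2}+a_2j(j-1)+b_1jg_{j-1}$; they are such that $\operatorname{L}_n(\vartheta_j)=(a_0j(j-1)+b_0j-\lambda_n)\vartheta_j+k_{1,j}\vartheta_{j-1}+k_{2,j}\vartheta_{j-2}$. *)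

(* Defs.v *)
(* Polynomials in t are elements of {poly R}; a "polynomial in
   mu(t)" is q \Po mu for some q : {poly R}. *)
From mathcomp Require Import all_boot all_order all_algebra.
Set Implicit Arguments. Unset Strict Implicit. Unset Printing Implicit Defensive.
Import Order.TTheory GRing.Theory Num.Theory.
Local Open Scope ring_scope.

Section Defs.
Variable R : numFieldType.

Definition mu (c2 c3 : R) : {poly R} := 'X^2 + c2 *: 'X + c3%:P.

Definition shiftp (f : {poly R}) : {poly R} := f \Po ('X + (2^-1 : R)%:P).
Definition shiftm (f : {poly R}) : {poly R} := f \Po ('X - (2^-1 : R)%:P).

Definition Dop (c2 c3 : R) (f : {poly R}) : {poly R} :=
  (shiftp f - shiftm f) %/ (shiftp (mu c2 c3) - shiftm (mu c2 c3)).

Definition Sop (f : {poly R}) : {poly R} := (2^-1 : R) *: (shiftp f + shiftm f).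

Definition pochp (p : {poly R}) (n : nat) : {poly R} :=
  \prod_(i < n) (p + (i%:R : R)%:P).

Definition theta (c2 : R) (n : nat) : {poly R} :=
  ((- 4 : R) ^- n) *:
    (pochp (2%:R *: 'X + (2^-1 + c2)%:P) n * pochp (- (2%:R *: 'X) + (2^-1 - c2)%:P) n).

Definition fcoef (c2 c3 : R) (n : nat) : R :=
  - (c2 ^+ 2) / 4%:R + ((2 * n + 1)%:R ^+ 2) / 16%:R + c3.

Definition gcoef (n : nat) : R := (n%:R * (2 * n%:R - 1)) / 4%:R.

Definition lam (a0 b0 : R) (n : nat) : R := n%:R * ((n%:R - 1) * a0 + b0).

(* k_{1,j}, k_{2,j}; the terms f_{j-2}, g_{j-1} only matter when their
   factors j(j-1) resp. j are nonzero *)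
Definition k1 (c2 c3 a0 a1 b0 b1 : R) (j : nat) : R :=
  a0 * j%:R * (j%:R - 1) * (fcoef c2 c3 j.-1 + fcoef c2 c3 j.-2)
  + b0 * j%:R * fcoef c2 c3 j.-1 + a1 * j%:R * (j%:R - 1)
  + b0 * j%:R * gcoef j.-1 + b1 * j%:R.

Definition k2 (c2 c3 a0 a1 a2 b0 b1 : R) (j : nat) : R :=
  a0 * j%:R * (j%:R - 1) * (fcoef c2 c3 j.-2) ^+ 2
  + a1 * j%:R * (j%:R - 1) * fcoef c2 c3 j.-2
  + b0 * j%:R * gcoef j.-1 * fcoef c2 c3 j.-2
  + a2 * j%:R * (j%:R - 1) + b1 * j%:R * gcoef j.-1.

Definition Lop (c2 c3 a0 a1 a2 b0 b1 : R) (n : nat) (f : {poly R}) : {poly R} :=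
  let m := mu c2 c3 in
  let phi := a0 *: m ^+ 2 + a1 *: m + a2%:P in
  let psi := b0 *: m + b1%:P in
  phi * Dop c2 c3 (Dop c2 c3 f) + psi * Sop (Dop c2 c3 f) - lam a0 b0 n *: f.

Definition monic_deg_in_mu (c2 c3 : R) (n : nat) (f : {poly R}) : Prop :=
  exists2 q : {poly R}, (q \is monic) /\ size q = n.+1 & f = q \Po mu c2 c3.

Definition deg_le_in_mu (c2 c3 : R) (d : nat) (f : {poly R}) : Prop :=
  exists2 q : {poly R}, (size q <= d.+1)%N & f = q \Po mu c2 c3.

End Defs.

(* Main.v *)
Require Import Defs.
From mathcomp Require Import all_boot all_order all_algebra.
From mathcomp Require Import ring lra zify.
Set Implicit Arguments. Unset Strict Implicit. Unset Printing Implicit Defensive.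
Import Order.TTheory GRing.Theory Num.Theory.
Local Open Scope ring_scope.
Section S.
Variable R : numFieldType.
Variables c2 c3 : R.

Lemma poly_eval_eq (p q : {poly R}) : (forall x, p.[x] = q.[x]) -> p = q.
Proof.
move=> H; apply/eqP; rewrite -subr_eq0; apply/eqP.
apply: (@roots_geq_poly_eq0 _ _ [seq i%:R | i <- iota 0 (size (p - q))]).
- apply/allP => y /mapP [i _ ->]; by rewrite /root hornerD hornerN H subrr.
- rewrite map_inj_uniq ?iota_uniq // => i j /eqP; by rewrite eqr_nat => /eqP.
- by rewrite size_map size_iota.
Qed.

Definition mf (x : R) := x ^+ 2 + c2 * x + c3.

Lemma mu_eval x : (mu c2 c3).[x] = mf x.
Proof. by rewrite /mu !hornerE. Qed.

Lemma shiftp_eval (f : {poly R}) x : (shiftp f).[x] = f.[x + 2^-1].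
Proof. by rewrite /shiftp horner_comp !hornerE. Qed.
Lemma shiftm_eval (f : {poly R}) x : (shiftm f).[x] = f.[x - 2^-1].
Proof. by rewrite /shiftm horner_comp !hornerE. Qed.

Fixpoint thf (n : nat) (x : R) : R :=
  if n is k.+1 then thf k x * (mf x - fcoef c2 c3 k) else 1.

Lemma fcoefE n : fcoef c2 c3 n = - c2 ^+ 2 / 4 + (2 * n%:R + 1) ^+ 2 / 16 + c3.
Proof. by rewrite /fcoef natrD natrM. Qed.

Lemma theta_eval n x : (theta c2 n).[x] = thf n x.
Proof.
elim: n => [|n IH]; first by rewrite /theta /pochp !big_ord0 expr0 invr1 mulr1 scale1r hornerC.
have -> : theta c2 n.+1 = theta c2 n * ((- 4 : R)^-1 *: ((2%:R *: 'X + (2^-1 + c2)%:P + (n%:R)%:P)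
        * (- (2%:R *: 'X) + (2^-1 - c2)%:P + (n%:R)%:P))).
  rewrite /theta /pochp !big_ord_recr /=.
  rewrite -scalerAl -scalerAr scalerA -exprVn exprSr exprVn.
  congr (_ *: _). ring.
rewrite hornerM IH /=; congr (_ * _).
rewrite hornerZ hornerM !(hornerD, hornerN, hornerZ, hornerX, hornerC) fcoefE /mf.
by field.
Qed.

Definition uu (k : nat) : R := (2 * k%:R + 1) / 2.

Lemma th_shift (e : R) n x : e = 1 \/ e = -1 ->
  thf n.+1 (x + e / 2) = thf n x * ((2 * x + c2 + e * uu n) * (2 * x + c2 + e * uu n.+1) / 4).
Proof.
move=> he; elim: n => [|n IH].
  rewrite /= !mul1r fcoefE /mf /uu; by case: he => ->; field.
have -> : thf n.+2 (x + e/2) = thf n.+1 (x + e/2) * (mf (x+e/2) - fcoef c2 c3 n.+1) by [].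
have -> : thf n.+1 x = thf n x * (mf x - fcoef c2 c3 n) by [].
rewrite IH.
rewrite !fcoefE /mf /uu -!natr1.
by case: he => ->; field.
Qed.

Lemma thp n x : thf n.+1 (x + 2^-1) = thf n x * ((2 * x + c2 + uu n) * (2 * x + c2 + uu n.+1) / 4).
Proof. by have := th_shift n x (or_introl erefl); rewrite !mul1r. Qed.
Lemma thm n x : thf n.+1 (x - 2^-1) = thf n x * ((2 * x + c2 - uu n) * (2 * x + c2 - uu n.+1) / 4).
Proof. by have := th_shift n x (or_intror erefl); rewrite !mulN1r. Qed.

Definition W := shiftp (mu c2 c3) - shiftm (mu c2 c3).

Lemma W_eval x : W.[x] = 2 * x + c2.
Proof. rewrite /W hornerD hornerN shiftp_eval shiftm_eval !mu_eval /mf. by field. Qed.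

Lemma W_neq0 : W != 0.
Proof.
apply/eqP => h; have := W_eval ((1 - c2) / 2); rewrite h hornerC.
have -> : 2 * ((1 - c2) / 2) + c2 = 1 by field.
by move/eqP; rewrite eq_sym oner_eq0.
Qed.

Lemma theta0 : theta c2 0 = 1.
Proof. by apply: poly_eval_eq => x; rewrite theta_eval hornerC. Qed.

Lemma Dop_theta0 : Dop c2 c3 (theta c2 0) = 0.
Proof. by rewrite theta0 /Dop /shiftp /shiftm !comp_polyC subrr div0p. Qed.

Lemma Dop_thetaS n : Dop c2 c3 (theta c2 n.+1) = n.+1%:R *: theta c2 n.
Proof.
rewrite /Dop -/W.
have -> : shiftp (theta c2 n.+1) - shiftm (theta c2 n.+1) = (n.+1%:R *: theta c2 n) * W.
  apply: poly_eval_eq => x.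
  rewrite hornerD hornerN hornerM hornerZ W_eval shiftp_eval shiftm_eval !theta_eval thp thm.
  rewrite /uu -natr1. by field.
by rewrite mulpK // W_neq0.
Qed.

Lemma Sop_theta0 : Sop (theta c2 0) = theta c2 0.
Proof. rewrite theta0 /Sop /shiftp /shiftm !comp_polyC.
apply: poly_eval_eq => x; rewrite hornerZ hornerD !hornerC; by field. Qed.

Lemma Sop_thetaS n : Sop (theta c2 n.+1) = theta c2 n.+1 + gcoef R n.+1 *: theta c2 n.
Proof.
apply: poly_eval_eq => x.
rewrite /Sop hornerZ !hornerD shiftp_eval shiftm_eval !theta_eval hornerZ theta_eval thp thm.
have -> : thf n.+1 x = thf n x * (mf x - fcoef c2 c3 n) by [].
rewrite /uu /gcoef fcoefE /mf -!natr1. by field.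
Qed.

Lemma DopL a (f g : {poly R}) : Dop c2 c3 (a *: f + g) = a *: Dop c2 c3 f + Dop c2 c3 g.
Proof.
rewrite /Dop /shiftp /shiftm !comp_polyD !comp_polyZ opprD addrACA -scalerBr.
by rewrite divpD divpZl.
Qed.

Lemma Dop0 : Dop c2 c3 0 = 0.
Proof. by rewrite /Dop /shiftp /shiftm !comp_poly0 subrr div0p. Qed.

Lemma DopZ a (f : {poly R}) : Dop c2 c3 (a *: f) = a *: Dop c2 c3 f.
Proof. by rewrite -[a *: f]addr0 DopL Dop0 addr0. Qed.

Lemma SopL a (f g : {poly R}) : Sop (a *: f + g) = a *: Sop f + Sop g.
Proof.
apply: poly_eval_eq => x.
rewrite /Sop !(hornerD, hornerZ, shiftp_eval, shiftm_eval). ring.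
Qed.

Lemma Sop0 : Sop (0 : {poly R}) = 0.
Proof. by rewrite /Sop /shiftp /shiftm !comp_poly0 addr0 scaler0. Qed.

Lemma SopZ a (f : {poly R}) : Sop (a *: f) = a *: Sop f.
Proof. by rewrite -[a *: f]addr0 SopL Sop0 addr0. Qed.

Variables a0 a1 a2 b0 b1 : R.

Lemma linaux (phi psi A B C D F G : {poly R}) a l :
  phi * (a *: A + B) + psi * (a *: C + D) - l *: (a *: F + G) =
  a *: (phi * A + psi * C - l *: F) + (phi * B + psi * D - l *: G).
Proof. apply: poly_eval_eq => x; rewrite !(hornerD, hornerN, hornerM, hornerZ). ring. Qed.

Lemma LopL N a (f g : {poly R}) :
  Lop c2 c3 a0 a1 a2 b0 b1 N (a *: f + g) =
  a *: Lop c2 c3 a0 a1 a2 b0 b1 N f + Lop c2 c3 a0 a1 a2 b0 b1 N g.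
Proof. by rewrite /Lop /= !DopL SopL linaux. Qed.

Lemma Lop0 N : Lop c2 c3 a0 a1 a2 b0 b1 N 0 = 0.
Proof.
have h := LopL N 1 0 0; rewrite !scale1r addr0 in h.
by apply: (@addrI _ (Lop c2 c3 a0 a1 a2 b0 b1 N 0)); rewrite addr0 -h.
Qed.

Local Opaque theta.

Definition LL N := Lop c2 c3 a0 a1 a2 b0 b1 N.

Lemma Ltheta N j : LL N (theta c2 j) =
  (lam a0 b0 j - lam a0 b0 N) *: theta c2 j
  + k1 c2 c3 a0 a1 b0 b1 j *: theta c2 j.-1
  + k2 c2 c3 a0 a1 a2 b0 b1 j *: theta c2 j.-2.
Proof.
rewrite /LL /Lop /=.
case: j => [|[|k]].
- rewrite Dop_theta0 Dop0 Sop0 /=.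
  apply: poly_eval_eq => x; move: (theta_eval) (mu_eval); move: (theta c2) (mu c2 c3) => T M hT hM.
  rewrite !(hornerD, hornerN, hornerM, hornerZ, hornerC) !hT.
  rewrite /lam /k1 /k2 /=. ring.
- rewrite Dop_thetaS DopZ Dop_theta0 scaler0 SopZ Sop_theta0 /=.
  apply: poly_eval_eq => x; move: (theta_eval) (mu_eval); move: (theta c2) (mu c2 c3) => T M hT hM.
  rewrite !(hornerD, hornerN, hornerM, hornerZ, hornerC, horner_exp) !hT hM.
  rewrite /lam /k1 /k2 /gcoef /= /mf !fcoefE. ring.
- rewrite Dop_thetaS DopZ Dop_thetaS SopZ Sop_thetaS /=.
  apply: poly_eval_eq => x; move: (theta_eval) (mu_eval); move: (theta c2) (mu c2 c3) => T M hT hM.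
  rewrite !(hornerD, hornerN, hornerM, hornerZ, hornerC, horner_exp) !hT hM.
  rewrite /lam /k1 /k2 /gcoef /= /mf !fcoefE -!natr1. ring.
Qed.

Lemma mu_theta (be : R) j : (mu c2 c3 - be%:P) * theta c2 j = theta c2 j.+1 + (fcoef c2 c3 j - be) *: theta c2 j.
Proof.
apply: poly_eval_eq => x; move: (theta_eval) (mu_eval); move: (theta c2) (mu c2 c3) => T M hT hM.
rewrite !(hornerD, hornerN, hornerM, hornerZ, hornerC) !hT hM /=. ring.
Qed.

Lemma mulL (be a : R) (f g : {poly R}) :
  (mu c2 c3 - be%:P) * (a *: f + g) = a *: ((mu c2 c3 - be%:P) * f) + (mu c2 c3 - be%:P) * g.
Proof. by rewrite mulrDr scalerAr. Qed.

Lemma LM N (be : R) j : LL N ((mu c2 c3 - be%:P) * theta c2 j) =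
  LL N (theta c2 j.+1) + (fcoef c2 c3 j - be) *: LL N (theta c2 j).
Proof. by rewrite mu_theta addrC /LL LopL addrC. Qed.

Fixpoint inS (m : nat) (X : {poly R}) : Prop :=
  if m is m'.+1 then exists c, inS m' (X - c *: theta c2 m') else X = 0.

Lemma inS0 m : inS m 0.
Proof. elim: m => [|m IH] //=; exists 0; by rewrite scale0r subrr. Qed.

Lemma inSD m X Y : inS m X -> inS m Y -> inS m (X + Y).
Proof.
elim: m X Y => [|m IH] X Y /=; first by move=> -> ->; rewrite addr0.
move=> [c hc] [d hd]; exists (c + d).
have -> : X + Y - (c + d) *: theta c2 m = (X - c *: theta c2 m) + (Y - d *: theta c2 m).
  by rewrite scalerDl opprD addrACA.
exact: IH.
Qed.

Lemma inSZ m a X : inS m X -> inS m (a *: X).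
Proof.
elim: m X => [|m IH] X /=; first by move=> ->; rewrite scaler0.
move=> [c hc]; exists (a * c); by rewrite -scalerA -scalerBr; apply: IH.
Qed.

Lemma inS_S m X : inS m X -> inS m.+1 X.
Proof. by move=> h; exists 0; rewrite scale0r subr0. Qed.

Lemma inS_le m m' X : (m <= m')%N -> inS m X -> inS m' X.
Proof.
move/subnKC => <-; elim: (m' - m)%N => [|k IH]; first by rewrite addn0.
by move=> h; rewrite addnS; apply: inS_S; apply: IH.
Qed.

Lemma inS_th k m : (k < m)%N -> inS m (theta c2 k).
Proof.
move=> hk; apply: (@inS_le k.+1) => //=; exists 1; rewrite scale1r subrr; exact: inS0.
Qed.

Lemma inS_sum m n (F : 'I_n -> {poly R}) : (forall i, inS m (F i)) -> inS m (\sum_(i < n) F i).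
Proof.
move=> h; apply: (big_ind (inS m)); [exact: inS0 | exact: inSD | move=> i _; exact: h].
Qed.

Lemma inS_form m X : inS m X -> exists d : nat -> R, X = \sum_(k < m) d k *: theta c2 k.
Proof.
elim: m X => [|m IH] X /=; first by move=> ->; exists (fun _ => 0); rewrite big_ord0.
move=> [c /IH [d hd]]; exists (fun k => if k == m then c else d k).
rewrite big_ord_recr /= eqxx -[X](subrK (c *: theta c2 m)) hd; congr (_ + _).
by apply: eq_bigr => i _; rewrite ifN // neq_ltn ltn_ord.
Qed.

Fixpoint Th (k : nat) : {poly R} := if k is k'.+1 then Th k' * ('X - (fcoef c2 c3 k')%:P) else 1.

Lemma Th_size k : size (Th k) = k.+1.
Proof.
have : Th k \is monic /\ size (Th k) = k.+1.
  elim: k => [|k [m s]] /=; first by rewrite monic1 size_poly1.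
  split; first by rewrite monicMl // monicXsubC.
  rewrite size_Mmonic ?size_XsubC ?s ?addn2 //; [exact: monic_neq0 | exact: monicXsubC].
by case.
Qed.

Lemma Th_monic k : Th k \is monic.
Proof. elim: k => [|k IH] /=; [exact: monic1 | by rewrite monicMl // monicXsubC]. Qed.

Lemma theta_Th k : theta c2 k = Th k \Po mu c2 c3.
Proof.
apply: poly_eval_eq => x; rewrite theta_eval horner_comp mu_eval.
elim: k => [|k IH] /=; first by rewrite hornerC.
by rewrite hornerM IH !hornerE.
Qed.

Lemma inS_deg m X : inS m X -> exists2 q : {poly R}, (size q <= m)%N & X = q \Po mu c2 c3.
Proof.
elim: m X => [|m IH] X /=; first by move=> ->; exists 0; rewrite ?size_poly0 ?comp_poly0.
move=> [c /IH [q sq hq]]; exists (q + c *: Th m).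
  rewrite (leq_trans (size_add _ _)) // geq_max (leq_trans sq) //.
  by rewrite (leq_trans (size_scale_leq _ _)) // Th_size.
by rewrite comp_polyD comp_polyZ -theta_Th -hq subrK.
Qed.

Lemma inS_Ltheta N k : inS k.+1 (LL N (theta c2 k)).
Proof.
rewrite Ltheta; apply: inSD; [apply: inSD|]; apply: inSZ; apply: inS_th; case: k => [|[|k]] //=; lia.
Qed.

Lemma inS_LM N be X j : inS j X -> inS j.+1 (LL N ((mu c2 c3 - be%:P) * X)).
Proof.
elim: j X => [|j IH] X.
  by move=> /= ->; rewrite mulr0 /LL Lop0; exists 0; rewrite scale0r subrr.
move=> h; have [c hc] : exists c, inS j (X - c *: theta c2 j) := h.
have -> : X = c *: theta c2 j + (X - c *: theta c2 j) by rewrite addrC subrK.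
rewrite mulL /LL LopL -!/(LL N _).
apply: inSD; last first.
  have := IH _ hc; rewrite /LL => h2; apply: inS_S; exact: h2.
apply: inSZ; rewrite LM; apply: inSD; first exact: inS_Ltheta.
apply: inSZ; apply: inS_S; exact: inS_Ltheta.
Qed.

Lemma LMD N be (f g : {poly R}) : LL N ((mu c2 c3 - be%:P) * (f + g)) =
  LL N ((mu c2 c3 - be%:P) * f) + LL N ((mu c2 c3 - be%:P) * g).
Proof. by have := LopL N 1 ((mu c2 c3 - be%:P) * f) ((mu c2 c3 - be%:P) * g); rewrite !scale1r mulrDr. Qed.

Lemma LMZ N be a (f : {poly R}) : LL N ((mu c2 c3 - be%:P) * (a *: f)) =
  a *: LL N ((mu c2 c3 - be%:P) * f).
Proof. by rewrite -[a *: f]addr0 mulL /LL LopL mulr0 Lop0 addr0. Qed.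

Lemma Lshift N M X : LL N X = LL M X + (lam a0 b0 M - lam a0 b0 N) *: X.
Proof. by rewrite /LL /Lop /= scalerBl addrA subrK. Qed.

Lemma size_mu : size (mu c2 c3) = 3%N.
Proof.
rewrite /mu -addrA size_addl ?size_polyXn //.
rewrite (leq_ltn_trans (size_add _ _)) // gtn_max.
rewrite (leq_ltn_trans (size_scale_leq _ _)) ?size_polyX //=.
by rewrite (leq_ltn_trans (size_polyC_leq1 _)).
Qed.

Lemma comp_mu_inj (q : {poly R}) : q \Po mu c2 c3 = 0 -> q = 0.
Proof. by move=> /eqP; rewrite comp_poly_eq0 ?size_mu // => /eqP. Qed.

Lemma comp_sum n (F : 'I_n -> {poly R}) : (\sum_(i < n) F i) \Po mu c2 c3 = \sum_(i < n) (F i \Po mu c2 c3).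
Proof. by apply: (big_morph _ (fun f g => comp_polyD f g _) (comp_poly0 _)). Qed.

Lemma lead_one n (q : {poly R}) (pp : nat -> R) : q \is monic -> size q = n.+1 ->
  q \Po mu c2 c3 = \sum_(k < n.+1) pp k *: theta c2 (n - k) -> pp 0%N = 1.
Proof.
move=> qm qs h.
have hq : q = \sum_(k < n.+1) pp k *: Th (n - k).
  apply/eqP; rewrite -subr_eq0; apply/eqP; apply: comp_mu_inj.
  rewrite comp_polyB h comp_sum; apply/eqP; rewrite subr_eq0; apply/eqP.
  by apply: eq_bigr => i _; rewrite comp_polyZ theta_Th.
have : q`_n = 1 by move/monicP: qm; rewrite lead_coefE qs.
rewrite hq coef_sum big_ord_recl /= subn0 coefZ.
have -> : (Th n)`_n = 1 by have /monicP := Th_monic n; rewrite lead_coefE Th_size.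
rewrite big1 ?addr0 ?mulr1 // => i _; rewrite coefZ nth_default ?mulr0 //.
rewrite Th_size /bump /=. have := ltn_ord i; lia.
Qed.
End S.
Theorem lemma4p2 (R : numFieldType) (c2 c3 a0 a1 a2 b0 b1 : R)
  (P : nat -> {poly R}) (p : nat -> nat -> R) :
  (forall n, monic_deg_in_mu c2 c3 n (P n) /\ Lop c2 c3 a0 a1 a2 b0 b1 n (P n) = 0) ->
  (forall n Q, monic_deg_in_mu c2 c3 n Q -> Lop c2 c3 a0 a1 a2 b0 b1 n Q = 0 -> Q = P n) ->
  (forall n, P n = \sum_(k < n.+1) p n k *: theta c2 (n - k)) ->
  (forall n k, (n < k)%N -> p n k = 0) ->
  forall n : nat, (1 <= n)%N ->
  exists beta : R,
    let U := Lop c2 c3 a0 a1 a2 b0 b1 n.+1 ((mu c2 c3 - beta%:P) * P n) in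
    [/\ deg_le_in_mu c2 c3 n.-1 U,
        beta = p n 1%N + fcoef c2 c3 n
               + k1 c2 c3 a0 a1 b0 b1 n.+1 / (lam a0 b0 n - lam a0 b0 n.+1)
      & exists d : nat -> R,
          U = (k2 c2 c3 a0 a1 a2 b0 b1 n.+1
               + (fcoef c2 c3 n + p n 1%N - beta) * k1 c2 c3 a0 a1 b0 b1 n
               + (p n 1%N * fcoef c2 c3 n.-1 + p n 2%N - beta * p n 1%N)
                 * (lam a0 b0 n.-1 - lam a0 b0 n.+1)) *: theta c2 n.-1
              + \sum_(k < n.-1) d k *: theta c2 k].
Proof.
move=> Hex Huniq Hexp Hp0 n hn.
have Hlead : forall k, p k 0%N = 1.
  move=> k; have [[q [qm qs] hq] _] := Hex k.
  apply: (lead_one (c2 := c2) (c3 := c3) (pp := p k) qm qs); by rewrite -hq -Hexp.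
have Hlam : forall n, lam a0 b0 n - lam a0 b0 n.+1 != 0.
  move=> {hn} n; rewrite subr_eq0; apply/eqP => heq.
  have [[q0 [q0m q0s] h0] L0] := Hex n.
  have [[q1 [q1m q1s] h1] L1] := Hex n.+1.
  have HQ : monic_deg_in_mu c2 c3 n.+1 (P n.+1 + P n).
    exists (q1 + q0); last by rewrite h1 h0 comp_polyD.
    have hs : (size q0 < size q1)%N by rewrite q0s q1s.
    split; first by rewrite monicE lead_coefDl //; exact: q1m.
    by rewrite size_addl.
  have LQ : Lop c2 c3 a0 a1 a2 b0 b1 n.+1 (P n.+1 + P n) = 0.
    have := LopL c2 c3 a0 a1 a2 b0 b1 n.+1 1 (P n.+1) (P n); rewrite !scale1r => ->.
    have := Lshift c2 c3 a0 a1 a2 b0 b1 n.+1 n (P n); rewrite /LL => ->.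
    by rewrite L1 L0 heq subrr scale0r !addr0.
  have := Huniq _ _ HQ LQ => /eqP; rewrite -{2}[P n.+1]addr0 => /eqP /addrI hP0.
  move: h0; rewrite hP0 => /esym /comp_mu_inj q00.
  by move: q0m; rewrite q00 monicE lead_coef0 eq_sym oner_eq0.
case: n hn => [//|[|m]] _.
- set be := p 1%N 1%N + fcoef c2 c3 1 + k1 c2 c3 a0 a1 b0 b1 2 / (lam a0 b0 1 - lam a0 b0 2).
  have hZ : k1 c2 c3 a0 a1 b0 b1 2 = - ((fcoef c2 c3 1 - be) * (lam a0 b0 1 - lam a0 b0 2)
            + p 1%N 1%N * (lam a0 b0 1 - lam a0 b0 2)).
    rewrite /be; field; exact: Hlam.
  exists be; cbv zeta.
  have hP : P 1%N = theta c2 1 + p 1%N 1%N *: theta c2 0.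
    rewrite Hexp big_ord_recl big_ord_recl big_ord0 Hlead scale1r addr0 /=. by [].
  have ek10 : k1 c2 c3 a0 a1 b0 b1 0 = 0 by rewrite /k1 /=; ring.
  have ek20 : k2 c2 c3 a0 a1 a2 b0 b1 0 = 0 by rewrite /k2 /gcoef /=; ring.
  have ek21 : k2 c2 c3 a0 a1 a2 b0 b1 1 = 0 by rewrite /k2 /gcoef /=; ring.
  have hU : Lop c2 c3 a0 a1 a2 b0 b1 2 ((mu c2 c3 - be%:P) * P 1%N) =
     (k2 c2 c3 a0 a1 a2 b0 b1 2 + (fcoef c2 c3 1 + p 1%N 1%N - be) * k1 c2 c3 a0 a1 b0 b1 1
      + (p 1%N 1%N * fcoef c2 c3 0 + p 1%N 2%N - be * p 1%N 1%N) * (lam a0 b0 0 - lam a0 b0 2)) *: theta c2 0.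
    rewrite -/(LL c2 c3 a0 a1 a2 b0 b1 2 _) hP LMD (@LMZ R c2 c3 a0 a1 a2 b0 b1 2 be (p 1%N 1%N)) !LM !Ltheta /=.
    rewrite hZ subrr (Hp0 1%N 2%N erefl) ek10 ek20 ek21.
    apply: poly_eval_eq => x; move: (theta c2) => T.
    rewrite !(hornerD, hornerN, hornerZ). ring.
  split.
  + have := @inS_deg R c2 c3 1 _ (inSZ (k2 c2 c3 a0 a1 a2 b0 b1 2 + (fcoef c2 c3 1 + p 1%N 1%N - be) * k1 c2 c3 a0 a1 b0 b1 1
      + (p 1%N 1%N * fcoef c2 c3 0 + p 1%N 2%N - be * p 1%N 1%N) * (lam a0 b0 0 - lam a0 b0 2)) (inS_th c2 (k := 0) (m := 1) erefl)).
    by rewrite -hU.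
  + by [].
  + exists (fun _ => 0); rewrite big_ord0 addr0; exact: hU.
- set be := p m.+2 1%N + fcoef c2 c3 m.+2 + k1 c2 c3 a0 a1 b0 b1 m.+3 / (lam a0 b0 m.+2 - lam a0 b0 m.+3).
  have hZ : k1 c2 c3 a0 a1 b0 b1 m.+3 = - ((fcoef c2 c3 m.+2 - be) * (lam a0 b0 m.+2 - lam a0 b0 m.+3)
            + p m.+2 1%N * (lam a0 b0 m.+2 - lam a0 b0 m.+3)).
    rewrite /be; field; exact: Hlam.
  exists be; cbv zeta.
  have hP : P m.+2 = theta c2 m.+2 + (p m.+2 1%N *: theta c2 m.+1 + (p m.+2 2%N *: theta c2 m
     + \sum_(i < m) p m.+2 i.+3 *: theta c2 (m.+2 - i.+3))).
    rewrite Hexp big_ord_recl big_ord_recl big_ord_recl Hlead scale1r /= subn0. have bz : forall i, bump 0 i = i.+1 by []. rewrite !bz (_ : (m.+2 - 1)%N = m.+1) ?subn1 // (_ : (m.+2 - 2)%N = m) ?subn2 //.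
  set R0 := \sum_(i < m) p m.+2 i.+3 *: theta c2 (m.+2 - i.+3).
  have hR : inS c2 m R0.
    apply: inS_sum => i; apply: inSZ; apply: inS_th; have := ltn_ord i; lia.
  pose LN := LL c2 c3 a0 a1 a2 b0 b1 m.+3.
  pose p1 := p m.+2 1%N. pose p2 := p m.+2 2%N.
  pose E := ((fcoef c2 c3 m.+2 - be) * k2 c2 c3 a0 a1 a2 b0 b1 m.+2) *: theta c2 m
     + p1 *: (k2 c2 c3 a0 a1 a2 b0 b1 m.+2 *: theta c2 m + (fcoef c2 c3 m.+1 - be) *:
          (k1 c2 c3 a0 a1 b0 b1 m.+1 *: theta c2 m + k2 c2 c3 a0 a1 a2 b0 b1 m.+1 *: theta c2 m.-1))
     + p2 *: (k1 c2 c3 a0 a1 b0 b1 m.+1 *: theta c2 m + k2 c2 c3 a0 a1 a2 b0 b1 m.+1 *: theta c2 m.-1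
          + (fcoef c2 c3 m - be) *: LN (theta c2 m))
     + LN ((mu c2 c3 - be%:P) * R0).
  have hE : inS c2 m.+1 E.
    rewrite /E /LN.
    have hth : inS c2 m.+1 (theta c2 m) := inS_th c2 (ltnSn m).
    have hth' : inS c2 m.+1 (theta c2 m.-1) by apply: inS_th; lia.
    have hLt := @inS_Ltheta R c2 c3 a0 a1 a2 b0 b1 m.+3 m.
    have hLR := @inS_LM R c2 c3 a0 a1 a2 b0 b1 m.+3 be _ _ hR.
    apply: inSD; first apply: inSD; first apply: inSD.
    - apply: inSZ; exact: hth.
    - apply: inSZ; apply: inSD; [apply: inSZ; exact: hth | apply: inSZ; apply: inSD; apply: inSZ; [exact: hth | exact: hth']].
    - apply: inSZ; apply: inSD; [apply: inSD; apply: inSZ; [exact: hth|exact: hth'] | apply: inSZ; exact: hLt].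
    - exact: hLR.
  pose t := k2 c2 c3 a0 a1 a2 b0 b1 m.+3 + (fcoef c2 c3 m.+2 + p1 - be) * k1 c2 c3 a0 a1 b0 b1 m.+2
         + (p1 * fcoef c2 c3 m.+1 + p2 - be * p1) * (lam a0 b0 m.+1 - lam a0 b0 m.+3).
  have hU : Lop c2 c3 a0 a1 a2 b0 b1 m.+3 ((mu c2 c3 - be%:P) * P m.+2) = t *: theta c2 m.+1 + E.
    rewrite -/(LL c2 c3 a0 a1 a2 b0 b1 m.+3 _) hP !LMD (@LMZ R c2 c3 a0 a1 a2 b0 b1 m.+3 be p1)
      (@LMZ R c2 c3 a0 a1 a2 b0 b1 m.+3 be p2) !LM.
    rewrite (@Ltheta R c2 c3 a0 a1 a2 b0 b1 m.+3 m.+3) (@Ltheta R c2 c3 a0 a1 a2 b0 b1 m.+3 m.+2)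
      (@Ltheta R c2 c3 a0 a1 a2 b0 b1 m.+3 m.+1) /=.
    rewrite /E /t /LN hZ subrr.
    apply: poly_eval_eq => x.
    move: (LL c2 c3 a0 a1 a2 b0 b1 m.+3 (theta c2 m)) (LL c2 c3 a0 a1 a2 b0 b1 m.+3 ((mu c2 c3 - be%:P) * R0)) => A B.
    move: (theta c2) => T.
    rewrite !(hornerD, hornerN, hornerZ). rewrite /p1 /p2. ring.
  split.
  + have := @inS_deg R c2 c3 m.+2 _ (inSD (inSZ t (inS_th c2 (k := m.+1) (m := m.+2) (ltnSn _))) (inS_S hE)).
    by rewrite -hU.
  + by [].
  + have [d hd] := inS_form hE; exists d; rewrite hU hd. by [].
Qed.
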